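(* Let $\mathsf V$ be a class of monotone views and let $\mathcal D$ be a probabilistic database such that there exist two facts $f_1,f_2$, each of positive marginal probability in $\mathcal D$, that are mutually exclusive, i.e. $\Pr_{D\sim\mathcal D}(f_1\in D\text{ and }f_2\in D)=0$. Then $\mathcal D\notin\mathsf V(\mathsf{TI})$.
   Context: Fix a countably infinite universe $U$. Facts are $R(u_1,\dots,u_{\mathrm{ar}(R)})$ with $R$ from a finite schema and $u_i\in U$; instances are finite sets of facts. A probabilistic database (PDB) is a discrete probability space $(\mathbb D,P)$ with $\mathbb D$ a nonempty countable set of instances; the marginal probability of a fact $f$ is $\Pr_{D\sim\mathcal D}(f\in D)$. A PDB $\mathcal I$ is tuple-independent if for all pairwise distinct facts $f_1,\dots,f_k$, $\Pr(f_1\in I,\dots,f_k\in I)=\prod_i\Pr(f_i\in I)$; $\mathsf{TI}$ is the class of these. A view is a function $V$ from instances of an input schema to instances of an output schema; it is monotone if $D\subseteq D'$ implies $V(D)\subseteq V(D')$. The image of a PDB $(\mathbb D,P)$ under $V$ is the PDB on $V(\mathbb D)$ with $P'(\{D'\})=P(\{D:V(D)=D'\})$; $\mathsf V(\mathsf{TI})$ is the class of images of TI-PDBs under views from $\mathsf V$. *)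

(* Defs.v *)
From HB Require Import structures.
From mathcomp Require Import all_boot all_order all_algebra.
From mathcomp Require Import finmap.
From mathcomp Require Import all_classical all_reals all_analysis.
Set Implicit Arguments. Unset Strict Implicit. Unset Printing Implicit Defensive.
Import Order.TTheory GRing.Theory Num.Theory.
Local Open Scope classical_set_scope.
Local Open Scope ring_scope.

Record schema := Schema { rel : finType ; arity : rel -> nat }.

Definition fact (U : countType) (S : schema) : Type :=
  {r : rel S & (arity r).-tuple U}.
HB.instance Definition _ U S := Choice.on (fact U S).

Definition inst (U : countType) (S : schema) : Type := {fset fact U S}.
HB.instance Definition _ U S := Choice.on (inst U S).

(* A PDB: a sample space (set of instances) with point masses P({D}). *)
Record pdb (R : realType) (U : countType) (S : schema) := PDB {
  pdb_dom : set (inst U S);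
  pdb_mass : inst U S -> R }.

Definition probE R U S (D : pdb R U S) (A : set (inst U S)) : \bar R :=
  \esum_(x in pdb_dom D `&` A) (pdb_mass D x)%:E.
Definition prob R U S (D : pdb R U S) (A : set (inst U S)) : R :=
  fine (probE D A).

Definition is_pdb R U S (D : pdb R U S) : Prop :=
  [/\ pdb_dom D !=set0, countable (pdb_dom D),
      (forall x, pdb_dom D x -> 0 <= pdb_mass D x) &
      probE D setT = 1%E].

Definition marginal R U S (D : pdb R U S) (f : fact U S) : R :=
  prob D [set x | f \in x].

Definition is_TI R U S (D : pdb R U S) : Prop :=
  forall s : seq (fact U S), uniq s ->
    prob D [set x | all (fun f => f \in x) s] = \prod_(f <- s) marginal D f.

Definition monotone_view U S S' (v : inst U S -> inst U S') : Prop :=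
  forall D D' : inst U S, fsubset D D' -> fsubset (v D) (v D').

Definition image_pdb R U S S' (v : inst U S -> inst U S') (D : pdb R U S)
  : pdb R U S' :=
  PDB (v @` pdb_dom D)
      (fun D' => prob D [set x | v x = D']).

Definition pdb_eq R U S (D1 D2 : pdb R U S) : Prop :=
  pdb_dom D1 = pdb_dom D2 /\
  (forall x, pdb_dom D1 x -> pdb_mass D1 x = pdb_mass D2 x).

Definition view_class U (S' : schema) : Type :=
  forall S : schema, set (inst U S -> inst U S').

Definition in_V_TI R U S' (VV : view_class U S') (D : pdb R U S') : Prop :=
  exists (S : schema) (v : inst U S -> inst U S'), VV S v /\
    exists I : pdb R U S, [/\ is_pdb I, is_TI I & pdb_eq (image_pdb v I) D].

(* Main.v *)
Require Import Defs.
From HB Require Import structures.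
From mathcomp Require Import all_boot all_order all_algebra.
From mathcomp Require Import finmap.
From mathcomp Require Import all_classical all_reals all_analysis.
Import Order.TTheory GRing.Theory Num.Theory.
Local Open Scope classical_set_scope.
Local Open Scope ring_scope.

Set Implicit Arguments.
Section L.
Variables (R : realType) (U : countType) (S : schema).

Lemma esum_subset (A B : set (inst U S)) (a : inst U S -> \bar R) :
  A `<=` B -> (forall x, B x -> (0 <= a x)%E) ->
  (\esum_(i in A) a i <= \esum_(i in B) a i)%E.
Proof.
move=> AB a0; rewrite (esum_mkcond A) (esum_mkcond B); apply: le_esum => i _.
case: ifPn => iA; first by rewrite ifT //; apply/mem_set/AB/set_mem.
by case: ifPn => // /set_mem /a0.
Qed.

Lemma probE_fin (P : pdb R U S) A : is_pdb P ->
  (0 <= probE P A)%E /\ (probE P A <= 1)%E.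
Proof.
case=> _ _ m0 Ht; split.
  by apply: esum_ge0 => x [dx _]; rewrite lee_fin m0.
rewrite -Ht; apply: esum_subset => [x [dx _]//|x [dx _]].
by rewrite lee_fin m0.
Qed.

Lemma point_le (P : pdb R U S) A x : is_pdb P -> pdb_dom P x -> A x ->
  pdb_mass P x <= prob P A.
Proof.
move=> HP dx Ax; have [h0 h1] := probE_fin A HP.
have fin : probE P A \is a fin_num.
  by rewrite ge0_fin_numE // (le_lt_trans h1) // ltey.
rewrite -lee_fin /prob fineK //; apply: esum_ge.
exists [set x]; first by split; [exact: finite_set1| move=> y ->].

by rewrite fsbig_set1.
Qed.

Lemma pos_point (P : pdb R U S) A : is_pdb P -> 0 < prob P A ->
  exists x, [/\ pdb_dom P x, A x & 0 < pdb_mass P x].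
Proof.
move=> HP; apply: contraPP => /forallNP H.
rewrite /prob /probE esum1 ?lt_irreflexive // => x [dx Ax].
case: HP => _ _ m0 _.
have := m0 _ dx; rewrite le_eqVlt => /orP[/eqP <- //|lt].
by exfalso; apply: (H x).
Qed.
End L.
Unset Implicit Arguments.

Theorem proposition6p5 (R : realType) (U : countType)
  (HU : infinite_set [set: U]) (S' : schema) (VV : view_class U S')
  (Hmono : forall (S : schema) (v : inst U S -> inst U S'),
      VV S v -> monotone_view v)
  (D : pdb R U S') (HD : is_pdb D) (f1 f2 : fact U S')
  (H1 : 0 < marginal D f1) (H2 : 0 < marginal D f2)
  (Hexcl : prob D [set x | f1 \in x /\ f2 \in x] = 0) :
  ~ in_V_TI VV D.
Proof.
move=> [S [v [Vv [I [HI HTI [Hdom Hmass]]]]]].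
have getJ : forall f, 0 < marginal D f ->
    exists J, [/\ pdb_dom I J, 0 < pdb_mass I J & f \in v J].
  move=> f /(pos_point _ HD) [D' [dD' fD' mD']].
  have dD'' : (v @` pdb_dom I) D' by rewrite -[_ @` _]/(pdb_dom (image_pdb v I)) Hdom.
  rewrite -Hmass // in mD'.
  have [J [dJ vJ mJ]] := pos_point _ HI mD'.
  by exists J; split => //; rewrite vJ.
have [J1 [d1 m1 i1]] := getJ _ H1.
have [J2 [d2 m2 i2]] := getJ _ H2.
pose s := enum_fset (J1 `|` J2)%fset.
have := HTI s (fset_uniq _).
have pos : 0 < \prod_(f <- s) marginal I f.
  rewrite big_seq; apply: prodr_gt0 => g gs.
  have : g \in (J1 `|` J2)%fset by [].
  rewrite inE => /orP[g1|g2].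
    by apply: (lt_le_trans m1); apply: point_le.
  by apply: (lt_le_trans m2); apply: point_le.
move=> E; rewrite -E in pos.
have [K [dK /allP allK mK]] := pos_point _ HI pos.
have sub : forall J, fsubset J (J1 `|` J2)%fset -> fsubset (v J) (v K).
  move=> J HJ; apply: (Hmono _ _ Vv); apply/fsubsetP => g gJ.
  apply: allK; have : g \in (J1 `|` J2)%fset by apply: (fsubsetP HJ).
  by [].
have k1 : f1 \in v K by apply: (fsubsetP (sub _ (fsubsetUl _ _))).
have k2 : f2 \in v K by apply: (fsubsetP (sub _ (fsubsetUr _ _))).
have dvK : (v @` pdb_dom I) (v K) by exists K.
have dDK : pdb_dom D (v K) by rewrite -Hdom.
have : pdb_mass D (v K) <= prob D [set x | f1 \in x /\ f2 \in x].
  by apply: point_le.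
rewrite Hexcl -Hmass //=.
have := @point_le _ _ _ I [set y | v y = v K] K HI dK erefl.
move=> h1 h2; have := lt_le_trans mK (le_trans h1 h2).
by rewrite lt_irreflexive.
Qed.
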